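(* Let $(\mathcal C,\otimes,I,a,l,r)$ be a monoidal category, $(F,\Delta,\varepsilon,F_2,F_0)$ and $(G,\delta,\epsilon,G_2,G_0)$ bicomonads on $\mathcal C$, and $\varphi:FG\to GF$ a comonad distributive law. The following are equivalent: (1) $(\mathcal C^{(F,G)}(\varphi),\otimes,I,a,l,r)$ is a monoidal category, where for bicomodules $X,Y$ the coactions on $X\otimes Y$ are $F_2(X,Y)\circ(\theta^X\otimes\theta^Y)$ and $G_2(X,Y)\circ(\rho^X\otimes\rho^Y)$ and $I$ has coactions $F_0,G_0$; (2) $\varphi$ is a monoidal comonad distributive law; (3) the smash coproduct $FG$ (comultiplication $F\varphi_{GX}\circ FF\delta_X\circ\Delta_{GX}$, counit $\epsilon_X\circ\varepsilon_{GX}$, monoidal structure $(FG)_2(M,N)=F(G_2(M,N))\circ F_2(GM,GN)$, $(FG)_0=F(G_0)\circ F_0$) is a bicomonad; (4) in the 2-category $\mathbf{Cmd}(\mathbf{Cat})$, $F_2$ is a 2-cell from the 1-cell $(\otimes\circ(F\times F),w)$ to the 1-cell $(F\circ\otimes,w')$, both from $(\mathcal C\times\mathcal C,G\times G,\delta\times\delta,\epsilon\times\epsilon)$ to $(\mathcal C,G,\delta,\epsilon)$, where $w_{(X,Y)}=G_2(FX,FY)\circ(\varphi_X\otimes\varphi_Y)$ and $w'_{(X,Y)}=\varphi_{X\otimes Y}\circ F(G_2(X,Y))$; and $F_0$ is a 2-cell from the 1-cell $(I,G_0)$ to the 1-cell $(FI,\varphi_I\circ F(G_0))$, both from $(\mathfrak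 I,\mathrm{id},\mathrm{id},\mathrm{id})$ to $(\mathcal C,G,\delta,\epsilon)$, where $\mathfrak I$ is the terminal category; (5) $(\otimes,F_2,G_2):(\mathcal C\times\mathcal C,F\times F,G\times G,\varphi\times\varphi)\to(\mathcal C,F,G,\varphi)$ and $(I,F_0,G_0):(\mathfrak I,\mathrm{id},\mathrm{id},\mathrm{id})\to(\mathcal C,F,G,\varphi)$ are 1-cells in $\mathbf{CC}(\mathbf{Cat})$.
   Context: Comonads, comonad distributive laws $\varphi:FG\to GF$ (conditions $G\varphi\circ\varphi G\circ F\delta=\delta F\circ\varphi$, $\varphi F\circ F\varphi\circ\Delta G=G\Delta\circ\varphi$, $G\varepsilon\circ\varphi=\varepsilon G$, $\epsilon F\circ\varphi=F\epsilon$), $\varphi$-bicomodules $(M,\theta^M,\rho^M)$ ($F$-comodule and $G$-comodule with $\varphi_M\circ F\rho^M\circ\theta^M=G\theta^M\circ\rho^M$) forming the category $\mathcal C^{(F,G)}(\varphi)$, and bicomonads (comonads that are monoidal functors $(G,G_2,G_0)$ with $G(G_2(X,Y))\circ G_2(GX,GY)\circ(\delta_X\otimes\delta_Y)=\delta_{X\otimes Y}\circ G_2(X,Y)$, $\epsilon_{X\otimes Y}\circ G_2=\epsilon_X\otimes\epsilon_Y$, $G(G_0)\circ G_0=\delta_I\circ G_0$, $\epsilon_I\circ G_0=\mathrm{id}_I$) are as usual. $\varphi$ is a monoidal comonad distributive law if $\varphi_{M\otimes N}\circ F(G_2(M,N))\circ F_2(GM,GN)=G(F_2(M,N))\circ G_2(FM,FN)\circ(\varphi_M\otimes\varphi_N)$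 and $\varphi_I\circ F(G_0)\circ F_0=G(F_0)\circ G_0$. The 2-category $\mathbf{Cmd}(\mathbb C)$ (for a 2-category $\mathbb C$, here $\mathbf{Cat}$): 0-cells are comonads $(Y,T,\delta,\epsilon)$ on objects $Y$; a 1-cell $(Y,T,\delta,\epsilon)\to(Y',T',\delta',\epsilon')$ is a pair $(W,w)$ with $W:Y\to Y'$ and $w:WT\Rightarrow T'W$ satisfying $\delta'W\circ w=T'w\circ wT\circ W\delta$ and $\epsilon'W\circ w=W\epsilon$; a 2-cell $(W,w)\Rightarrow(V,v)$ is $\chi:W\Rightarrow V$ with $v\circ\chi T=T'\chi\circ w$. The 2-category $\mathbf{CC}(\mathbb C)$: 0-cells $(C,D,T,\varphi)$ with $D=(D,\Delta,\varepsilon)$, $T=(T,\delta,\epsilon)$ comonads on $C$ and $\varphi:DT\Rightarrow TD$ a comonad distributive law; a 1-cell $(C,D,T,\varphi)\to(C',D',T',\varphi')$ is $(J,j_d,j_t)$ with $J:C\to C'$, $j_d:JD\Rightarrow D'J$, $j_t:JT\Rightarrow T'J$ satisfying $\Delta'J\circ j_d=D'j_d\circ j_dD\circ J\Delta$, $J\varepsilon=\varepsilon'J\circ j_d$, $\delta'J\circ j_t=T'j_t\circ j_tT\circ J\delta$, $J\epsilon=\epsilon'J\circ j_t$, and $T'j_d\circ j_tD\circ J\varphi=\varphi'J\circ D'j_t\circ j_dT$ as maps $JDT\Rightarrow T'D'J$. *)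

(* Defs.v *)
Set Implicit Arguments.
Unset Strict Implicit.
Set Primitive Projections.

(* Pairs with definitional eta (objects/morphisms of product categories). *)
Record prd (A B : Type) : Type := mkprd { pr1 : A; pr2 : B }.
Arguments mkprd {A B} _ _.
Arguments pr1 {A B} _.
Arguments pr2 {A B} _.

Record Category : Type := {
  ob :> Type;
  hom : ob -> ob -> Type;
  idm : forall A, hom A A;
  comp : forall A B C, hom B C -> hom A B -> hom A C;
  comp_idl : forall A B (f : hom A B), comp (idm B) f = f;
  comp_idr : forall A B (f : hom A B), comp f (idm A) = f;
  comp_assoc : forall A B C D (h : hom C D) (g : hom B C) (f : hom A B),
      comp h (comp g f) = comp (comp h g) f }.
Arguments hom {c} _ _.
Arguments idm {c} A.
Arguments comp {c A B C} _ _.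
Notation "g ∘ f" := (comp g f) (at level 40, left associativity).

Record Functor (C D : Category) : Type := {
  fobj :> C -> D;
  fmap : forall A B : C, hom A B -> hom (fobj A) (fobj B);
  fmap_id : forall A, fmap (idm A) = idm (fobj A);
  fmap_comp : forall A B E (g : hom B E) (f : hom A B),
      fmap (g ∘ f) = fmap g ∘ fmap f }.
Arguments fmap {C D} f {A B} _ : rename.

Definition natural {C D : Category} (F G : Functor C D)
  (eta : forall X, hom (F X) (G X)) : Prop :=
  forall X Y (f : hom X Y), eta Y ∘ fmap F f = fmap G f ∘ eta X.

Definition Fid (C : Category) : Functor C C.
Proof.
  refine (@Build_Functor C C (fun X => X) (fun A B f => f) _ _);
    reflexivity.
Defined.

Definition Fcomp {C D E : Category} (G : Functor D E) (F : Functor C D)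
  : Functor C E.
Proof.
  refine (@Build_Functor C E (fun X => G (F X))
            (fun A B f => fmap G (fmap F f)) _ _).
  - intro A; rewrite fmap_id; apply fmap_id.
  - intros; rewrite fmap_comp; apply fmap_comp.
Defined.

Definition ProdCat (C D : Category) : Category.
Proof.
  refine (@Build_Category (prd C D)
            (fun p q => prd (hom (pr1 p) (pr1 q)) (hom (pr2 p) (pr2 q)))
            (fun p => mkprd (idm (pr1 p)) (idm (pr2 p)))
            (fun p q r g f => mkprd (pr1 g ∘ pr1 f) (pr2 g ∘ pr2 f)) _ _ _).
  - intros A B f; simpl; rewrite !comp_idl; reflexivity.
  - intros A B f; simpl; rewrite !comp_idr; reflexivity.
  - intros; simpl; rewrite !comp_assoc; reflexivity.
Defined.

Definition Fprod {C C' D D' : Category} (F : Functor C D) (G : Functor C' D')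
  : Functor (ProdCat C C') (ProdCat D D').
Proof.
  refine (@Build_Functor (ProdCat C C') (ProdCat D D')
            (fun p => mkprd (F (pr1 p)) (G (pr2 p)))
            (fun p q f => mkprd (fmap F (pr1 f)) (fmap G (pr2 f))) _ _).
  - intros; simpl; rewrite !fmap_id; reflexivity.
  - intros; simpl; rewrite !fmap_comp; reflexivity.
Defined.

Definition TermCat : Category.
Proof.
  refine (@Build_Category unit (fun _ _ => unit) (fun _ => tt)
            (fun _ _ _ _ _ => tt) _ _ _);
    intros; repeat match goal with u : unit |- _ => destruct u end;
    reflexivity.
Defined.

Definition Fconst {C : Category} (X : C) : Functor TermCat C.
Proof.
  refine (@Build_Functor TermCat C (fun _ => X) (fun _ _ _ => idm X) _ _).
  - reflexivity.
  - intros; simpl; rewrite comp_idl; reflexivity.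
Defined.

Definition tob {C : Category} (T : Functor (ProdCat C C) C) (X Y : C) : C :=
  T (mkprd X Y).
Definition tmor {C : Category} (T : Functor (ProdCat C C) C) {X Y X' Y' : C}
  (f : hom X X') (g : hom Y Y') : hom (tob T X Y) (tob T X' Y') :=
  @fmap _ _ T (mkprd X Y) (mkprd X' Y') (mkprd f g).

Definition is_monoidal (C : Category) (T : Functor (ProdCat C C) C) (I : C)
  (a : forall X Y Z, hom (tob T (tob T X Y) Z) (tob T X (tob T Y Z)))
  (ai : forall X Y Z, hom (tob T X (tob T Y Z)) (tob T (tob T X Y) Z))
  (l : forall X, hom (tob T I X) X) (li : forall X, hom X (tob T I X))
  (r : forall X, hom (tob T X I) X) (ri : forall X, hom X (tob T X I)) : Prop :=
  (forall X Y Z, a X Y Z ∘ ai X Y Z = idm _ /\ ai X Y Z ∘ a X Y Z = idm _) /\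
  (forall X, l X ∘ li X = idm _ /\ li X ∘ l X = idm _) /\
  (forall X, r X ∘ ri X = idm _ /\ ri X ∘ r X = idm _) /\
  (forall X X' Y Y' Z Z' (f : hom X X') (g : hom Y Y') (h : hom Z Z'),
      a X' Y' Z' ∘ tmor T (tmor T f g) h = tmor T f (tmor T g h) ∘ a X Y Z) /\
  (forall X X' (f : hom X X'), l X' ∘ tmor T (idm I) f = f ∘ l X) /\
  (forall X X' (f : hom X X'), r X' ∘ tmor T f (idm I) = f ∘ r X) /\
  (forall W X Y Z,
      a W X (tob T Y Z) ∘ a (tob T W X) Y Z
      = tmor T (idm W) (a X Y Z) ∘ a W (tob T X Y) Z ∘ tmor T (a W X Y) (idm Z)) /\
  (forall X Y, tmor T (idm X) (l Y) ∘ a X I Y = tmor T (r X) (idm Y)).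

Record MonoidalCategory : Type := {
  mc :> Category;
  tensor : Functor (ProdCat mc mc) mc;
  munit : mc;
  massoc : forall X Y Z : mc,
      hom (tob tensor (tob tensor X Y) Z) (tob tensor X (tob tensor Y Z));
  massoc_inv : forall X Y Z : mc,
      hom (tob tensor X (tob tensor Y Z)) (tob tensor (tob tensor X Y) Z);
  mlunit : forall X : mc, hom (tob tensor munit X) X;
  mlunit_inv : forall X : mc, hom X (tob tensor munit X);
  mrunit : forall X : mc, hom (tob tensor X munit) X;
  mrunit_inv : forall X : mc, hom X (tob tensor X munit);
  m_ax : @is_monoidal mc tensor munit massoc massoc_inv mlunit mlunit_inv mrunit mrunit_inv }.
Arguments tensor m : clear implicits.
Arguments munit m : clear implicits.
Arguments massoc m X Y Z : clear implicits.
Arguments massoc_inv m X Y Z : clear implicits.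
Arguments mlunit m X : clear implicits.
Arguments mlunit_inv m X : clear implicits.
Arguments mrunit m X : clear implicits.
Arguments mrunit_inv m X : clear implicits.

Notation "X ⊗ Y" := (tob (tensor _) X Y) (at level 30, right associativity).
Definition tm {M : MonoidalCategory} {X Y X' Y' : M} (f : hom X X') (g : hom Y Y')
  : hom (X ⊗ Y) (X' ⊗ Y') := tmor (tensor M) f g.

Definition is_comonad {C : Category} (H : Functor C C)
  (d : forall X, hom (H X) (H (H X))) (e : forall X, hom (H X) X) : Prop :=
  natural (F := H) (G := Fcomp H H) d /\
  natural (F := H) (G := Fid C) e /\
  (forall X, fmap H (d X) ∘ d X = d (H X) ∘ d X) /\
  (forall X, e (H X) ∘ d X = idm (H X)) /\
  (forall X, fmap H (e X) ∘ d X = idm (H X)).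

Definition is_monoidal_functor {M : MonoidalCategory} (H : Functor M M)
  (H2 : forall X Y : M, hom (H X ⊗ H Y) (H (X ⊗ Y))) (H0 : hom (munit M) (H (munit M)))
  : Prop :=
  (forall X X' Y Y' (f : hom X X') (g : hom Y Y'),
      H2 X' Y' ∘ tm (fmap H f) (fmap H g) = fmap H (tm f g) ∘ H2 X Y) /\
  (forall X Y Z : M,
      fmap H (massoc M X Y Z) ∘ H2 (X ⊗ Y) Z ∘ tm (H2 X Y) (idm (H Z))
      = H2 X (Y ⊗ Z) ∘ tm (idm (H X)) (H2 Y Z) ∘ massoc M (H X) (H Y) (H Z)) /\
  (forall X : M,
      fmap H (mlunit M X) ∘ H2 (munit M) X ∘ tm H0 (idm (H X)) = mlunit M (H X)) /\
  (forall X : M,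
      fmap H (mrunit M X) ∘ H2 X (munit M) ∘ tm (idm (H X)) H0 = mrunit M (H X)).

Definition bicomonad_compat {M : MonoidalCategory} (H : Functor M M)
  (d : forall X, hom (H X) (H (H X))) (e : forall X, hom (H X) X)
  (H2 : forall X Y : M, hom (H X ⊗ H Y) (H (X ⊗ Y))) (H0 : hom (munit M) (H (munit M)))
  : Prop :=
  (forall X Y : M,
      fmap H (H2 X Y) ∘ H2 (H X) (H Y) ∘ tm (d X) (d Y) = d (X ⊗ Y) ∘ H2 X Y) /\
  (forall X Y : M, e (X ⊗ Y) ∘ H2 X Y = tm (e X) (e Y)) /\
  (fmap H H0 ∘ H0 = d (munit M) ∘ H0) /\
  (e (munit M) ∘ H0 = idm (munit M)).

Definition is_bicomonad {M : MonoidalCategory} (H : Functor M M)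
  (d : forall X, hom (H X) (H (H X))) (e : forall X, hom (H X) X)
  (H2 : forall X Y : M, hom (H X ⊗ H Y) (H (X ⊗ Y))) (H0 : hom (munit M) (H (munit M)))
  : Prop :=
  is_comonad d e /\ is_monoidal_functor H2 H0 /\ bicomonad_compat d e H2 H0.

Record Bicomonad (M : MonoidalCategory) : Type := {
  bfun :> Functor M M;
  bdelta : forall X, hom (bfun X) (bfun (bfun X));
  beps : forall X, hom (bfun X) X;
  b2 : forall X Y : M, hom (bfun X ⊗ bfun Y) (bfun (X ⊗ Y));
  b0 : hom (munit M) (bfun (munit M));
  b_ax : is_bicomonad bdelta beps b2 b0 }.
Arguments bdelta {M} b X.
Arguments beps {M} b X.
Arguments b2 {M} b X Y.
Arguments b0 {M} b.

Definition is_distr_law {C : Category} (F : Functor C C)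
  (DF : forall X, hom (F X) (F (F X))) (eF : forall X, hom (F X) X)
  (G : Functor C C)
  (dG : forall X, hom (G X) (G (G X))) (eG : forall X, hom (G X) X)
  (phi : forall X, hom (F (G X)) (G (F X))) : Prop :=
  natural (F := Fcomp F G) (G := Fcomp G F) phi /\
  (forall X, fmap G (phi X) ∘ phi (G X) ∘ fmap F (dG X) = dG (F X) ∘ phi X) /\
  (forall X, phi (F X) ∘ fmap F (phi X) ∘ DF (G X) = fmap G (DF X) ∘ phi X) /\
  (forall X, fmap G (eF X) ∘ phi X = eF (G X)) /\
  (forall X, eG (F X) ∘ phi X = fmap F (eG X)).

Definition monoidal_distr_law {M : MonoidalCategory} (F G : Bicomonad M)
  (phi : forall X, hom (F (G X)) (G (F X))) : Prop :=
  (forall X Y : M,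
      phi (X ⊗ Y) ∘ fmap F (b2 G X Y) ∘ b2 F (G X) (G Y)
      = fmap G (b2 F X Y) ∘ b2 G (F X) (F Y) ∘ tm (phi X) (phi Y)) /\
  (phi (munit M) ∘ fmap F (b0 G) ∘ b0 F = fmap G (b0 F) ∘ b0 G).

Definition is_comodule {C : Category} (H : Functor C C)
  (d : forall X, hom (H X) (H (H X))) (e : forall X, hom (H X) X)
  (X : C) (c : hom X (H X)) : Prop :=
  d X ∘ c = fmap H c ∘ c /\ e X ∘ c = idm X.

Definition is_bicomodule {M : MonoidalCategory} (F G : Bicomonad M)
  (phi : forall X, hom (F (G X)) (G (F X)))
  (X : M) (th : hom X (F X)) (rho : hom X (G X)) : Prop :=
  is_comodule (bdelta F) (beps F) th /\ is_comodule (bdelta G) (beps G) rho /\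
  phi X ∘ fmap F rho ∘ th = fmap G th ∘ rho.
Arguments is_bicomodule {M F G} phi {X} th rho.

Definition is_bicomod_map {M : MonoidalCategory} (F G : Bicomonad M)
  {X Y : M} (thX : hom X (F X)) (rhoX : hom X (G X))
  (thY : hom Y (F Y)) (rhoY : hom Y (G Y)) (f : hom X Y) : Prop :=
  thY ∘ f = fmap F f ∘ thX /\ rhoY ∘ f = fmap G f ∘ rhoX.
Arguments is_bicomod_map {M} F G {X Y} thX rhoX thY rhoY f.

Definition tco {M : MonoidalCategory} (H : Bicomonad M) {X Y : M}
  (cX : hom X (H X)) (cY : hom Y (H Y)) : hom (X ⊗ Y) (H (X ⊗ Y)) :=
  b2 H X Y ∘ tm cX cY.
Arguments tco {M} H {X Y} cX cY.

(* (C^{(F,G)}(phi), ⊗, I, a, l, r) is a monoidal category, i.e. the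
   monoidal structure of C (with the coactions of the statement) lifts
   along the faithful forgetful functor: tensor products of bicomodules
   and I are bicomodules, tensor products of bicomodule maps and the
   components of a, l, r (and their inverses) are bicomodule maps.  The
   monoidal-category axioms then hold because they hold in C. *)
Definition lifted_monoidal {M : MonoidalCategory} (F G : Bicomonad M)
  (phi : forall X, hom (F (G X)) (G (F X))) : Prop :=
  (forall (X : M) (thX : hom X (F X)) (rhoX : hom X (G X)) (Y : M) (thY : hom Y (F Y)) (rhoY : hom Y (G Y)),
      is_bicomodule phi thX rhoX -> is_bicomodule phi thY rhoY ->
      is_bicomodule phi (tco F thX thY) (tco G rhoX rhoY)) /\
  is_bicomodule phi (b0 F) (b0 G) /\
  (forall (X : M) (thX : hom X (F X)) (rhoX : hom X (G X)) (X' : M) (thX' : hom X' (F X')) (rhoX' : hom X' (G X')) (Y : M) (thY : hom Y (F Y)) (rhoY : hom Y (G Y)) (Y' : M) (thY' : hom Y' (F Y')) (rhoY' : hom Y' (G Y'))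
          (f : hom X X') (g : hom Y Y'),
      is_bicomodule phi thX rhoX -> is_bicomodule phi thX' rhoX' ->
      is_bicomodule phi thY rhoY -> is_bicomodule phi thY' rhoY' ->
      is_bicomod_map F G thX rhoX thX' rhoX' f ->
      is_bicomod_map F G thY rhoY thY' rhoY' g ->
      is_bicomod_map F G (tco F thX thY) (tco G rhoX rhoY)
                         (tco F thX' thY') (tco G rhoX' rhoY') (tm f g)) /\
  (forall (X : M) (thX : hom X (F X)) (rhoX : hom X (G X)) (Y : M) (thY : hom Y (F Y)) (rhoY : hom Y (G Y)) (Z : M) (thZ : hom Z (F Z)) (rhoZ : hom Z (G Z)),
      is_bicomodule phi thX rhoX -> is_bicomodule phi thY rhoY ->
      is_bicomodule phi thZ rhoZ ->
      is_bicomod_map F G (tco F (tco F thX thY) thZ) (tco G (tco G rhoX rhoY) rhoZ)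
                         (tco F thX (tco F thY thZ)) (tco G rhoX (tco G rhoY rhoZ))
                         (massoc M X Y Z) /\
      is_bicomod_map F G (tco F thX (tco F thY thZ)) (tco G rhoX (tco G rhoY rhoZ))
                         (tco F (tco F thX thY) thZ) (tco G (tco G rhoX rhoY) rhoZ)
                         (massoc_inv M X Y Z)) /\
  (forall (X : M) (thX : hom X (F X)) (rhoX : hom X (G X)),
      is_bicomodule phi thX rhoX ->
      is_bicomod_map F G (tco F (b0 F) thX) (tco G (b0 G) rhoX) thX rhoX (mlunit M X) /\
      is_bicomod_map F G thX rhoX (tco F (b0 F) thX) (tco G (b0 G) rhoX) (mlunit_inv M X) /\
      is_bicomod_map F G (tco F thX (b0 F)) (tco G rhoX (b0 G)) thX rhoX (mrunit M X) /\
      is_bicomod_map F G thX rhoX (tco F thX (b0 F)) (tco G rhoX (b0 G)) (mrunit_inv M X)).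

Definition smash_delta {M : MonoidalCategory} (F G : Bicomonad M)
  (phi : forall X, hom (F (G X)) (G (F X))) (X : M)
  : hom (F (G X)) (F (G (F (G X)))) :=
  fmap F (phi (G X)) ∘ fmap F (fmap F (bdelta G X)) ∘ bdelta F (G X).
Definition smash_eps {M : MonoidalCategory} (F G : Bicomonad M) (X : M)
  : hom (F (G X)) X := beps G X ∘ beps F (G X).
Definition smash2 {M : MonoidalCategory} (F G : Bicomonad M) (X Y : M)
  : hom (F (G X) ⊗ F (G Y)) (F (G (X ⊗ Y))) :=
  fmap F (b2 G X Y) ∘ b2 F (G X) (G Y).
Definition smash0 {M : MonoidalCategory} (F G : Bicomonad M)
  : hom (munit M) (F (G (munit M))) := fmap F (b0 G) ∘ b0 F.

Definition is_cmd_1cell {Y Y' : Category}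
  (T : Functor Y Y) (d : forall y, hom (T y) (T (T y))) (e : forall y, hom (T y) y)
  (T' : Functor Y' Y') (d' : forall y, hom (T' y) (T' (T' y))) (e' : forall y, hom (T' y) y)
  (W : Functor Y Y') (w : forall y, hom (W (T y)) (T' (W y))) : Prop :=
  natural (F := Fcomp W T) (G := Fcomp T' W) w /\
  (forall y, d' (W y) ∘ w y = fmap T' (w y) ∘ w (T y) ∘ fmap W (d y)) /\
  (forall y, e' (W y) ∘ w y = fmap W (e y)).
Arguments is_cmd_1cell {Y Y' T} d e {T'} d' e' W w.

Definition is_cmd_2cell {Y Y' : Category} (T : Functor Y Y) (T' : Functor Y' Y')
  (W : Functor Y Y') (w : forall y, hom (W (T y)) (T' (W y)))
  (V : Functor Y Y') (v : forall y, hom (V (T y)) (T' (V y)))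
  (chi : forall y, hom (W y) (V y)) : Prop :=
  natural (F := W) (G := V) chi /\
  (forall y, v y ∘ chi (T y) = fmap T' (chi y) ∘ w y).
Arguments is_cmd_2cell {Y Y'} T T' W w V v chi.

Definition prod_delta {M : MonoidalCategory} (H : Bicomonad M) (p : ProdCat M M)
  : hom (Fprod H H p) (Fprod H H (Fprod H H p)) :=
  mkprd (bdelta H (pr1 p)) (bdelta H (pr2 p)).
Definition prod_eps {M : MonoidalCategory} (H : Bicomonad M) (p : ProdCat M M)
  : hom (Fprod H H p) p := mkprd (beps H (pr1 p)) (beps H (pr2 p)).
Definition term_delta (t : TermCat) : hom (Fid TermCat t) (Fid TermCat (Fid TermCat t))
  := idm t.
Definition term_eps (t : TermCat) : hom (Fid TermCat t) t := idm t.

Definition cmd_condition {M : MonoidalCategory} (F G : Bicomonad M)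
  (phi : forall X, hom (F (G X)) (G (F X))) : Prop :=
  let W1 := Fcomp (tensor M) (Fprod F F) in
  let W2 := Fcomp F (tensor M) in
  let w1 := fun p : ProdCat M M =>
              b2 G (F (pr1 p)) (F (pr2 p)) ∘ tm (phi (pr1 p)) (phi (pr2 p)) in
  let w2 := fun p : ProdCat M M =>
              phi (pr1 p ⊗ pr2 p) ∘ fmap F (b2 G (pr1 p) (pr2 p)) in
  let U1 := Fconst (munit M) in
  let U2 := Fconst (F (munit M)) in
  let u1 := fun _ : TermCat => b0 G in
  let u2 := fun _ : TermCat => phi (munit M) ∘ fmap F (b0 G) in
  (is_cmd_1cell (prod_delta G) (prod_eps G) (bdelta G) (beps G) W1 w1 /\
   is_cmd_1cell (prod_delta G) (prod_eps G) (bdelta G) (beps G) W2 w2 /\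
   is_cmd_2cell (Fprod G G) G W1 w1 W2 w2 (fun p => b2 F (pr1 p) (pr2 p))) /\
  (is_cmd_1cell term_delta term_eps (bdelta G) (beps G) U1 u1 /\
   is_cmd_1cell term_delta term_eps (bdelta G) (beps G) U2 u2 /\
   is_cmd_2cell (Fid TermCat) G U1 u1 U2 u2 (fun _ => b0 F)).

Definition is_cc_1cell {C C' : Category}
  (D : Functor C C) (dD : forall y, hom (D y) (D (D y))) (eD : forall y, hom (D y) y)
  (T : Functor C C) (dT : forall y, hom (T y) (T (T y))) (eT : forall y, hom (T y) y)
  (phi : forall y, hom (D (T y)) (T (D y)))
  (D' : Functor C' C') (dD' : forall y, hom (D' y) (D' (D' y))) (eD' : forall y, hom (D' y) y)
  (T' : Functor C' C') (dT' : forall y, hom (T' y) (T' (T' y))) (eT' : forall y, hom (T' y) y)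
  (phi' : forall y, hom (D' (T' y)) (T' (D' y)))
  (J : Functor C C') (jd : forall y, hom (J (D y)) (D' (J y)))
  (jt : forall y, hom (J (T y)) (T' (J y))) : Prop :=
  is_cmd_1cell dD eD dD' eD' J jd /\
  is_cmd_1cell dT eT dT' eT' J jt /\
  (forall y, fmap T' (jd y) ∘ jt (D y) ∘ fmap J (phi y)
             = phi' (J y) ∘ fmap D' (jt y) ∘ jd (T y)).
Arguments is_cc_1cell {C C' D} dD eD {T} dT eT phi {D'} dD' eD' {T'} dT' eT' phi' J jd jt.

Definition cc_condition {M : MonoidalCategory} (F G : Bicomonad M)
  (phi : forall X, hom (F (G X)) (G (F X))) : Prop :=
  is_cc_1cell (prod_delta F) (prod_eps F) (prod_delta G) (prod_eps G)
              (fun p : ProdCat M M => mkprd (phi (pr1 p)) (phi (pr2 p)))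
              (bdelta F) (beps F) (bdelta G) (beps G) phi
              (tensor M) (fun p => b2 F (pr1 p) (pr2 p)) (fun p => b2 G (pr1 p) (pr2 p)) /\
  is_cc_1cell term_delta term_eps term_delta term_eps
              (fun t : TermCat => idm t)
              (bdelta F) (beps F) (bdelta G) (beps G) phi
              (Fconst (munit M)) (fun _ => b0 F) (fun _ => b0 G).

Arguments monoidal_distr_law {M} F G phi.
Arguments lifted_monoidal {M} F G phi.
Arguments cmd_condition {M} F G phi.
Arguments cc_condition {M} F G phi.
Arguments smash_delta {M} F G phi X.
Arguments smash_eps {M} F G X.
Arguments smash2 {M} F G X Y.
Arguments smash0 {M} F G.

(* Main.v *)
Require Import Defs.

Lemma pre2 {C : Category} {A B E : C} {a : hom B E} {b : hom A B} {r : hom A E}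
  : a ∘ b = r -> forall Z (k : hom E Z), k ∘ a ∘ b = k ∘ r.
Proof. intros H Z k; rewrite <- comp_assoc, H; reflexivity. Qed.
Lemma pre3 {C : Category} {A B B' E : C} {a : hom B' E} {b : hom B B'} {c : hom A B} {r : hom A E}
  : a ∘ b ∘ c = r -> forall Z (k : hom E Z), k ∘ a ∘ b ∘ c = k ∘ r.
Proof. intros H Z k; rewrite <- H, !comp_assoc; reflexivity. Qed.
Lemma pre4 {C : Category} {A B B' B'' E : C} {a : hom B'' E} {b : hom B' B''} {c : hom B B'} {d : hom A B} {r : hom A E}
  : a ∘ b ∘ c ∘ d = r -> forall Z (k : hom E Z), k ∘ a ∘ b ∘ c ∘ d = k ∘ r.
Proof. intros H Z k; rewrite <- H, !comp_assoc; reflexivity. Qed.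
Lemma pre5 {C : Category} {A B B' B'' B3 E : C} {a : hom B3 E} {a' : hom B'' B3} {b : hom B' B''} {c : hom B B'} {d : hom A B} {r : hom A E}
  : a ∘ a' ∘ b ∘ c ∘ d = r -> forall Z (k : hom E Z), k ∘ a ∘ a' ∘ b ∘ c ∘ d = k ∘ r.
Proof. intros H Z k; rewrite <- H, !comp_assoc; reflexivity. Qed.
Lemma pre6 {C : Category} {A B B' B'' B3 B4 E : C} {a0 : hom B4 E} {a : hom B3 B4} {a' : hom B'' B3} {b : hom B' B''} {c : hom B B'} {d : hom A B} {r : hom A E}
  : a0 ∘ a ∘ a' ∘ b ∘ c ∘ d = r -> forall Z (k : hom E Z), k ∘ a0 ∘ a ∘ a' ∘ b ∘ c ∘ d = k ∘ r.
Proof. intros H Z k; rewrite <- H, !comp_assoc; reflexivity. Qed.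

Lemma tm_comp {M : MonoidalCategory} {X Y Z X' Y' Z' : M} (g : hom Y Z) (f : hom X Y)
  (g' : hom Y' Z') (f' : hom X' Y') : tm (g ∘ f) (g' ∘ f') = tm g g' ∘ tm f f'.
Proof. exact (@fmap_comp _ _ (tensor M) (mkprd X X') (mkprd Y Y') (mkprd Z Z') (mkprd g g') (mkprd f f')). Qed.
Lemma tm_id {M : MonoidalCategory} (X Y : M) : tm (idm X) (idm Y) = idm (X ⊗ Y).
Proof. exact (fmap_id (tensor M) (mkprd X Y)). Qed.

Ltac norm := repeat (rewrite ?fmap_comp, ?tm_comp, ?comp_assoc, ?fmap_id, ?tm_id, ?comp_idl, ?comp_idr).

Ltac rw t :=
  let T := type of t in
  lazymatch T with
  | _ ∘ _ ∘ _ ∘ _ ∘ _ ∘ _ = _ => first [rewrite t | rewrite (pre6 t)]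
  | _ ∘ _ ∘ _ ∘ _ ∘ _ = _ => first [rewrite t | rewrite (pre5 t)]
  | _ ∘ _ ∘ _ ∘ _ = _ => first [rewrite t | rewrite (pre4 t)]
  | _ ∘ _ ∘ _ = _ => first [rewrite t | rewrite (pre3 t)]
  | _ ∘ _ = _ => first [rewrite t | rewrite (pre2 t)]
  | _ => rewrite t
  end; norm.
Ltac rwb t := rw (eq_sym t).

Lemma lift2 {C D : Category} (H : Functor C D) {A B E : C} {a : hom B E} {b : hom A B} {r : hom A E}
  : a ∘ b = r -> fmap H a ∘ fmap H b = fmap H r.
Proof. intros e; rewrite <- e, fmap_comp; reflexivity. Qed.
Lemma lift3 {C D : Category} (H : Functor C D) {A B B' E : C} {a : hom B' E} {b : hom B B'} {c : hom A B} {r : hom A E}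
  : a ∘ b ∘ c = r -> fmap H a ∘ fmap H b ∘ fmap H c = fmap H r.
Proof. intros e; rewrite <- e, !fmap_comp; reflexivity. Qed.
Lemma lift4 {C D : Category} (H : Functor C D) {A B B' B'' E : C} {a : hom B'' E} {b : hom B' B''} {c : hom B B'} {d : hom A B} {r : hom A E}
  : a ∘ b ∘ c ∘ d = r -> fmap H a ∘ fmap H b ∘ fmap H c ∘ fmap H d = fmap H r.
Proof. intros e; rewrite <- e, !fmap_comp; reflexivity. Qed.
Lemma lift5 {C D : Category} (H : Functor C D) {A B B' B'' B3 E : C} {a : hom B3 E} {a' : hom B'' B3} {b : hom B' B''} {c : hom B B'} {d : hom A B} {r : hom A E}
  : a ∘ a' ∘ b ∘ c ∘ d = r -> fmap H a ∘ fmap H a' ∘ fmap H b ∘ fmap H c ∘ fmap H d = fmap H r.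
Proof. intros e; rewrite <- e, !fmap_comp; reflexivity. Qed.
Ltac lift H e :=
  let T := type of e in
  lazymatch T with
  | _ ∘ _ ∘ _ ∘ _ ∘ _ = _ => constr:(lift5 H e)
  | _ ∘ _ ∘ _ ∘ _ = _ => constr:(lift4 H e)
  | _ ∘ _ ∘ _ = _ => constr:(lift3 H e)
  | _ ∘ _ = _ => constr:(lift2 H e)
  end.
Ltac rwF H e := let e' := lift H e in rw e'.
Ltac rwFF H K e := let e1 := lift K e in let e2 := lift H e1 in rw e2.
Ltac rwFFF H K L e := let e1 := lift L e in let e2 := lift K e1 in let e3 := lift H e2 in rw e3.




Lemma a_ai (M : MonoidalCategory) (X Y Z : M) : massoc M X Y Z ∘ massoc_inv M X Y Z = idm _.
Proof. apply (m_ax M). Qed.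
Lemma ai_a (M : MonoidalCategory) (X Y Z : M) : massoc_inv M X Y Z ∘ massoc M X Y Z = idm _.
Proof. apply (m_ax M). Qed.
Lemma l_li (M : MonoidalCategory) (X : M) : mlunit M X ∘ mlunit_inv M X = idm _.
Proof. apply (m_ax M). Qed.
Lemma li_l (M : MonoidalCategory) (X : M) : mlunit_inv M X ∘ mlunit M X = idm _.
Proof. apply (m_ax M). Qed.
Lemma r_ri (M : MonoidalCategory) (X : M) : mrunit M X ∘ mrunit_inv M X = idm _.
Proof. apply (m_ax M). Qed.
Lemma ri_r (M : MonoidalCategory) (X : M) : mrunit_inv M X ∘ mrunit M X = idm _.
Proof. apply (m_ax M). Qed.
Lemma a_nat (M : MonoidalCategory) {X X' Y Y' Z Z' : M} (f : hom X X') (g : hom Y Y') (h : hom Z Z') :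
  massoc M X' Y' Z' ∘ tm (tm f g) h = tm f (tm g h) ∘ massoc M X Y Z.
Proof. apply (m_ax M). Qed.
Lemma l_nat (M : MonoidalCategory) {X X' : M} (f : hom X X') :
  mlunit M X' ∘ tm (idm (munit M)) f = f ∘ mlunit M X.
Proof. apply (m_ax M). Qed.
Lemma r_nat (M : MonoidalCategory) {X X' : M} (f : hom X X') :
  mrunit M X' ∘ tm f (idm (munit M)) = f ∘ mrunit M X.
Proof. apply (m_ax M). Qed.

Section dummy. End dummy.
Lemma d_nat {M : MonoidalCategory} (H : Bicomonad M) {X Y : M} (f : hom X Y) :
  bdelta H Y ∘ fmap H f = fmap H (fmap H f) ∘ bdelta H X.
Proof. destruct (b_ax H) as [[Hn _] _]; apply Hn. Qed.
Lemma e_nat {M : MonoidalCategory} (H : Bicomonad M) {X Y : M} (f : hom X Y) :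
  beps H Y ∘ fmap H f = f ∘ beps H X.
Proof. destruct (b_ax H) as [[_ [Hn _]] _]; apply Hn. Qed.
Lemma coass {M : MonoidalCategory} (H : Bicomonad M) (X : M) :
  fmap H (bdelta H X) ∘ bdelta H X = bdelta H (H X) ∘ bdelta H X.
Proof. destruct (b_ax H) as [[_ [_ [Hn _]]] _]; apply Hn. Qed.
Lemma cu1 {M : MonoidalCategory} (H : Bicomonad M) (X : M) :
  beps H (H X) ∘ bdelta H X = idm _.
Proof. destruct (b_ax H) as [[_ [_ [_ [Hn _]]]] _]; apply Hn. Qed.
Lemma cu2 {M : MonoidalCategory} (H : Bicomonad M) (X : M) :
  fmap H (beps H X) ∘ bdelta H X = idm _.
Proof. destruct (b_ax H) as [[_ [_ [_ [_ Hn]]]] _]; apply Hn. Qed.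
Lemma nat2 {M : MonoidalCategory} (H : Bicomonad M) {X X' Y Y' : M} (f : hom X X') (g : hom Y Y') :
  b2 H X' Y' ∘ tm (fmap H f) (fmap H g) = fmap H (tm f g) ∘ b2 H X Y.
Proof. destruct (b_ax H) as [_ [[Hn _] _]]; apply Hn. Qed.
Lemma ass2 {M : MonoidalCategory} (H : Bicomonad M) (X Y Z : M) :
  fmap H (massoc M X Y Z) ∘ b2 H (X ⊗ Y) Z ∘ tm (b2 H X Y) (idm (H Z))
  = b2 H X (Y ⊗ Z) ∘ tm (idm (H X)) (b2 H Y Z) ∘ massoc M (H X) (H Y) (H Z).
Proof. destruct (b_ax H) as [_ [[_ [Hn _]] _]]; apply Hn. Qed.
Lemma lu2 {M : MonoidalCategory} (H : Bicomonad M) (X : M) :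
  fmap H (mlunit M X) ∘ b2 H (munit M) X ∘ tm (b0 H) (idm (H X)) = mlunit M (H X).
Proof. destruct (b_ax H) as [_ [[_ [_ [Hn _]]] _]]; apply Hn. Qed.
Lemma ru2 {M : MonoidalCategory} (H : Bicomonad M) (X : M) :
  fmap H (mrunit M X) ∘ b2 H X (munit M) ∘ tm (idm (H X)) (b0 H) = mrunit M (H X).
Proof. destruct (b_ax H) as [_ [[_ [_ [_ Hn]]] _]]; apply Hn. Qed.
Lemma cd2 {M : MonoidalCategory} (H : Bicomonad M) (X Y : M) :
  fmap H (b2 H X Y) ∘ b2 H (H X) (H Y) ∘ tm (bdelta H X) (bdelta H Y) = bdelta H (X ⊗ Y) ∘ b2 H X Y.
Proof. destruct (b_ax H) as [_ [_ [Hn _]]]; apply Hn. Qed.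
Lemma ce2 {M : MonoidalCategory} (H : Bicomonad M) (X Y : M) :
  beps H (X ⊗ Y) ∘ b2 H X Y = tm (beps H X) (beps H Y).
Proof. destruct (b_ax H) as [_ [_ [_ [Hn _]]]]; apply Hn. Qed.
Lemma cd0 {M : MonoidalCategory} (H : Bicomonad M) :
  fmap H (b0 H) ∘ b0 H = bdelta H (munit M) ∘ b0 H.
Proof. destruct (b_ax H) as [_ [_ [_ [_ [Hn _]]]]]; apply Hn. Qed.
Lemma ce0 {M : MonoidalCategory} (H : Bicomonad M) :
  beps H (munit M) ∘ b0 H = idm _.
Proof. destruct (b_ax H) as [_ [_ [_ [_ [_ Hn]]]]]; apply Hn. Qed.

Definition DL {M : MonoidalCategory} (F G : Bicomonad M) (phi : forall X : M, hom (F (G X)) (G (F X))) :=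
  is_distr_law (bdelta F) (beps F) (bdelta G) (beps G) phi.

Lemma phi_nat {M : MonoidalCategory} {F G : Bicomonad M} {phi} (Hp : DL F G phi) {X Y : M} (f : hom X Y) :
  phi Y ∘ fmap F (fmap G f) = fmap G (fmap F f) ∘ phi X.
Proof. destruct Hp as [Hn _]; apply Hn. Qed.
Lemma dl1 {M : MonoidalCategory} {F G : Bicomonad M} {phi} (Hp : DL F G phi) (X : M) :
  fmap G (phi X) ∘ phi (G X) ∘ fmap F (bdelta G X) = bdelta G (F X) ∘ phi X.
Proof. destruct Hp as [_ [Hn _]]; apply Hn. Qed.
Lemma dl2 {M : MonoidalCategory} {F G : Bicomonad M} {phi} (Hp : DL F G phi) (X : M) :
  phi (F X) ∘ fmap F (phi X) ∘ bdelta F (G X) = fmap G (bdelta F X) ∘ phi X.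
Proof. destruct Hp as [_ [_ [Hn _]]]; apply Hn. Qed.
Lemma dl3 {M : MonoidalCategory} {F G : Bicomonad M} {phi} (Hp : DL F G phi) (X : M) :
  fmap G (beps F X) ∘ phi X = beps F (G X).
Proof. destruct Hp as [_ [_ [_ [Hn _]]]]; apply Hn. Qed.
Lemma dl4 {M : MonoidalCategory} {F G : Bicomonad M} {phi} (Hp : DL F G phi) (X : M) :
  beps G (F X) ∘ phi X = fmap F (beps G X).
Proof. destruct Hp as [_ [_ [_ [_ Hn]]]]; apply Hn. Qed.

Lemma sd_proj {M : MonoidalCategory} {F G : Bicomonad M} {phi} (Hp : DL F G phi) (X : M) :
  fmap G (fmap F (beps G X)) ∘ beps F (G (F (G X))) ∘ smash_delta F G phi X = phi X.
Proof.
  unfold smash_delta. norm.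
  rw (e_nat F (phi (G X))).
  rw (e_nat F (fmap F (bdelta G X))).
  rw (cu1 F (G X)). norm.
  rwb (phi_nat Hp (beps G X)).
  rwF F (cu2 G X). norm. reflexivity.
Qed.

Ltac fixtm :=
  repeat match goal with
  | |- context [@fmap _ _ (tensor ?M) ?p ?q {| pr1 := ?a; pr2 := ?b |}] =>
      change (@fmap _ _ (tensor M) p q {| pr1 := a; pr2 := b |}) with (tm a b)
  end;
  repeat match goal with
  | |- context [fobj (tensor ?M) {| pr1 := ?a; pr2 := ?b |}] =>
      change (fobj (tensor M) {| pr1 := a; pr2 := b |}) with (tob (tensor M) a b)
  end.
Ltac prep :=
  intros;
  repeat match goal with p : prd _ _ |- _ => let a := fresh "x" in let b := fresh "y" in destruct p as [a b] end;
  repeat match goal with u : unit |- _ => destruct u end;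
  unfold prod_delta, prod_eps, term_delta, term_eps in *; cbn in *; fixtm; norm.

Lemma tm2 {M : MonoidalCategory} {A B E A' B' E' : M} {a : hom B E} {b : hom A B} {r : hom A E}
  {a' : hom B' E'} {b' : hom A' B'} {r' : hom A' E'} :
  a ∘ b = r -> a' ∘ b' = r' -> tm a a' ∘ tm b b' = tm r r'.
Proof. intros e e'; rewrite <- e, <- e', tm_comp; reflexivity. Qed.
Lemma tm3 {M : MonoidalCategory} {A B C E A' B' C' E' : M} {a : hom C E} {b : hom B C} {c : hom A B} {r : hom A E}
  {a' : hom C' E'} {b' : hom B' C'} {c' : hom A' B'} {r' : hom A' E'} :
  a ∘ b ∘ c = r -> a' ∘ b' ∘ c' = r' -> tm a a' ∘ tm b b' ∘ tm c c' = tm r r'.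
Proof. intros e e'; rewrite <- e, <- e', !tm_comp; reflexivity. Qed.
Lemma tm1l {M : MonoidalCategory} {A B : M} (a : hom A B) {A' B' C' : M} (g : hom B' C') (f : hom A' B') :
  tm a (g ∘ f) = tm a g ∘ tm (idm A) f.
Proof. rewrite <- tm_comp, comp_idr; reflexivity. Qed.
Lemma tm1r {M : MonoidalCategory} {A B : M} (a : hom A B) {A' B' C' : M} (g : hom B' C') (f : hom A' B') :
  tm (g ∘ f) a = tm g a ∘ tm f (idm A).
Proof. rewrite <- tm_comp, comp_idr; reflexivity. Qed.
Lemma tm_split {M : MonoidalCategory} {A B A' B' : M} (a : hom A B) (b : hom A' B') :
  tm a b = tm a (idm B') ∘ tm (idm A) b.
Proof. rewrite <- tm_comp, comp_idr, comp_idl; reflexivity. Qed.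
Lemma tm_split' {M : MonoidalCategory} {A B A' B' : M} (a : hom A B) (b : hom A' B') :
  tm a b = tm (idm B) b ∘ tm a (idm A').
Proof. rewrite <- tm_comp, comp_idr, comp_idl; reflexivity. Qed.
Ltac rwT e e' :=
  let T := type of e in
  lazymatch T with
  | _ ∘ _ ∘ _ = _ => rw (tm3 e e')
  | _ ∘ _ = _ => rw (tm2 e e')
  end.
Ltac rwbF H e := rwF H (eq_sym e).
Ltac rwFb H e := rwF H (eq_sym e).
Lemma tm4 {M : MonoidalCategory} {A B C D E A' B' C' D' E' : M} {a : hom D E} {b : hom C D} {c : hom B C} {d : hom A B} {r : hom A E}
  {a' : hom D' E'} {b' : hom C' D'} {c' : hom B' C'} {d' : hom A' B'} {r' : hom A' E'} :
  a ∘ b ∘ c ∘ d = r -> a' ∘ b' ∘ c' ∘ d' = r' -> tm a a' ∘ tm b b' ∘ tm c c' ∘ tm d d' = tm r r'.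
Proof. intros e e'; rewrite <- e, <- e', !tm_comp; reflexivity. Qed.
Ltac tmeq e e' :=
  let T := type of e in
  lazymatch T with
  | _ ∘ _ ∘ _ ∘ _ = _ => constr:(tm4 e e')
  | _ ∘ _ ∘ _ = _ => constr:(tm3 e e')
  | _ ∘ _ = _ => constr:(tm2 e e')
  end.
Ltac rwT' e e' := let t := tmeq e e' in rw t.
Ltac rwFT H e e' := let t := tmeq e e' in rwF H t.
Lemma tm1l' {M : MonoidalCategory} {A B : M} (a : hom A B) {A' B' C' : M} (g : hom B' C') (f : hom A' B') :
  tm a (g ∘ f) = tm (idm B) g ∘ tm a f.
Proof. rewrite <- tm_comp, comp_idl; reflexivity. Qed.
Lemma tm1r' {M : MonoidalCategory} {A B : M} (a : hom A B) {A' B' C' : M} (g : hom B' C') (f : hom A' B') :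
  tm (g ∘ f) a = tm g (idm B) ∘ tm f a.
Proof. rewrite <- tm_comp, comp_idl; reflexivity. Qed.
Lemma nat2l {M : MonoidalCategory} (H : Bicomonad M) {X X' : M} (f : hom X X') (Y : M) :
  b2 H X' Y ∘ tm (fmap H f) (idm (H Y)) = fmap H (tm f (idm Y)) ∘ b2 H X Y.
Proof. rewrite <- (fmap_id H Y). apply nat2. Qed.
Lemma nat2r {M : MonoidalCategory} (H : Bicomonad M) (X : M) {Y Y' : M} (g : hom Y Y') :
  b2 H X Y' ∘ tm (idm (H X)) (fmap H g) = fmap H (tm (idm X) g) ∘ b2 H X Y.
Proof. rewrite <- (fmap_id H X). apply nat2. Qed.
Ltac rwFF' H K e := let e1 := lift K e in let e2 := lift H e1 in rw e2.
Ltac rwFFb H K e := rwFF H K (eq_sym e).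


Lemma w1_nat {M : MonoidalCategory} {F G : Bicomonad M} {phi} (Hp : DL F G phi) {X X' Y Y' : M} (f : hom X X') (g : hom Y Y') :
  b2 G (F X') (F Y') ∘ tm (phi X') (phi Y') ∘ tm (fmap F (fmap G f)) (fmap F (fmap G g)) =
  fmap G (tm (fmap F f) (fmap F g)) ∘ b2 G (F X) (F Y) ∘ tm (phi X) (phi Y).
Proof. rwT (phi_nat Hp f) (phi_nat Hp g). rw (nat2 G (fmap F f) (fmap F g)). reflexivity. Qed.
Lemma w1_d {M : MonoidalCategory} {F G : Bicomonad M} {phi} (Hp : DL F G phi) (x y : M) :
 bdelta G (F x ⊗ F y) ∘ b2 G (F x) (F y) ∘ tm (phi x) (phi y) =
 fmap G (b2 G (F x) (F y)) ∘ fmap G (tm (phi x) (phi y))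
 ∘ b2 G (F (G x)) (F (G y)) ∘ tm (phi (G x)) (phi (G y))
 ∘ tm (fmap F (bdelta G x)) (fmap F (bdelta G y)).
Proof. rwb (cd2 G (F x) (F y)). rwT (eq_sym (dl1 Hp x)) (eq_sym (dl1 Hp y)). rw (nat2 G (phi x) (phi y)). reflexivity. Qed.
Lemma w1_e {M : MonoidalCategory} {F G : Bicomonad M} {phi} (Hp : DL F G phi) (x y : M) :
 beps G (F x ⊗ F y) ∘ b2 G (F x) (F y) ∘ tm (phi x) (phi y) =
 tm (fmap F (beps G x)) (fmap F (beps G y)).
Proof. rw (ce2 G (F x) (F y)). rwT (dl4 Hp x) (dl4 Hp y). reflexivity. Qed.
Lemma w2_nat {M : MonoidalCategory} {F G : Bicomonad M} {phi} (Hp : DL F G phi) {X X' Y Y' : M} (f : hom X X') (g : hom Y Y') :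
 phi (X' ⊗ Y') ∘ fmap F (b2 G X' Y') ∘ fmap F (tm (fmap G f) (fmap G g)) =
 fmap G (fmap F (tm f g)) ∘ phi (X ⊗ Y) ∘ fmap F (b2 G X Y).
Proof. rwF F (nat2 G f g). rw (phi_nat Hp (tm f g)). reflexivity. Qed.
Lemma w2_d {M : MonoidalCategory} {F G : Bicomonad M} {phi} (Hp : DL F G phi) (x y : M) :
 bdelta G (F (x ⊗ y)) ∘ phi (x ⊗ y) ∘ fmap F (b2 G x y) =
 fmap G (phi (x ⊗ y)) ∘ fmap G (fmap F (b2 G x y))
 ∘ phi (G x ⊗ G y) ∘ fmap F (b2 G (G x) (G y))
 ∘ fmap F (tm (bdelta G x) (bdelta G y)).
Proof. rwb (dl1 Hp (x ⊗ y)). rwbF F (cd2 G x y). rw (phi_nat Hp (b2 G x y)). reflexivity. Qed.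
Lemma w2_e {M : MonoidalCategory} {F G : Bicomonad M} {phi} (Hp : DL F G phi) (x y : M) :
 beps G (F (x ⊗ y)) ∘ phi (x ⊗ y) ∘ fmap F (b2 G x y) =
 fmap F (tm (beps G x) (beps G y)).
Proof. rw (dl4 Hp (x ⊗ y)). rwF F (ce2 G x y). reflexivity. Qed.
Lemma u2_d {M : MonoidalCategory} {F G : Bicomonad M} {phi} (Hp : DL F G phi) :
 bdelta G (F (munit M)) ∘ phi (munit M) ∘ fmap F (b0 G) =
 fmap G (phi (munit M)) ∘ fmap G (fmap F (b0 G)) ∘ phi (munit M) ∘ fmap F (b0 G).
Proof. rwb (dl1 Hp (munit M)). rwbF F (cd0 G). rw (phi_nat Hp (b0 G)). reflexivity. Qed.
Lemma u2_e {M : MonoidalCategory} {F G : Bicomonad M} {phi} (Hp : DL F G phi) :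
 beps G (F (munit M)) ∘ phi (munit M) ∘ fmap F (b0 G) = idm (F (munit M)).
Proof. rw (dl4 Hp (munit M)). rwF F (ce0 G). norm. reflexivity. Qed.

Lemma cmd_iff {M : MonoidalCategory} (F G : Bicomonad M) phi (Hp : DL F G phi) :
  cmd_condition F G phi <-> monoidal_distr_law F G phi.
Proof.
  unfold cmd_condition, monoidal_distr_law, is_cmd_1cell, is_cmd_2cell, natural.
  cbn.
  split.
  - intros [[_ [_ [_ H2]]] [_ [_ [_ H0]]]]. split.
    + intros X Y; pose proof (H2 (mkprd X Y)) as E; etransitivity; [exact E|]; norm; reflexivity.
    + exact (H0 tt).
  - intros [H2 H0]. repeat split; prep.
    + apply (w1_nat Hp).
    + apply (w1_d Hp).
    + apply (w1_e Hp).
    + apply (w2_nat Hp).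
    + apply (w2_d Hp).
    + apply (w2_e Hp).
    + apply nat2.
    + apply H2.
    + reflexivity.
    + symmetry; apply cd0.
    + apply ce0.
    + reflexivity.
    + apply (u2_d Hp).
    + apply (u2_e Hp).
    + reflexivity.
    + apply H0.
Qed.

Lemma cc_iff {M : MonoidalCategory} (F G : Bicomonad M) phi (Hp : DL F G phi) :
  cc_condition F G phi <-> monoidal_distr_law F G phi.
Proof.
  unfold cc_condition, monoidal_distr_law, is_cc_1cell, is_cmd_1cell, natural.
  cbn.
  split.
  - intros [[_ [_ H2]] [_ [_ H0]]]. split.
    + intros X Y; pose proof (H2 (mkprd X Y)) as E; symmetry; etransitivity; [exact E|]; norm; reflexivity.
    + pose proof (H0 tt) as E; rewrite comp_idr in E; symmetry; exact E.
  - intros [H2 H0]. repeat split; prep.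
    + apply nat2.
    + symmetry; apply cd2.
    + apply ce2.
    + apply nat2.
    + symmetry; apply cd2.
    + apply ce2.
    + symmetry; apply H2.
    + reflexivity.
    + symmetry; apply cd0.
    + apply ce0.
    + reflexivity.
    + symmetry; apply cd0.
    + apply ce0.
    + symmetry; apply H0.
Qed.

Lemma cofree_bic {M : MonoidalCategory} {F G : Bicomonad M} {phi} (Hp : DL F G phi) (X : M) :
  is_bicomodule phi (bdelta F (G X)) (phi (G X) ∘ fmap F (bdelta G X)).
Proof.
  unfold is_bicomodule, is_comodule. repeat split; norm.
  - symmetry; apply coass.
  - apply cu1.
  - rwb (dl1 Hp (G X)). rwFb F (coass G X). rw (phi_nat Hp (bdelta G X)). reflexivity.
  - rw (dl4 Hp (G X)). rwF F (cu1 G X). norm; reflexivity.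
  - rwb (d_nat F (bdelta G X)). rw (dl2 Hp (G X)). reflexivity.
Qed.

Lemma inner1 {M : MonoidalCategory} {F G : Bicomonad M} {phi} (Hp : DL F G phi) (X : M) :
  fmap G (beps G X) ∘ fmap G (beps F (G X)) ∘ phi (G X) ∘ fmap F (bdelta G X) = beps F (G X).
Proof. rw (dl3 Hp (G X)). rwb (e_nat F (fmap G (beps G X))). rwF F (cu2 G X). norm. reflexivity. Qed.
Lemma inner2 {M : MonoidalCategory} {F G : Bicomonad M} {phi} (Hp : DL F G phi) (X : M) :
  fmap G (fmap F (beps G X)) ∘ phi (G X) ∘ fmap F (bdelta G X) = phi X.
Proof. rwb (phi_nat Hp (beps G X)). rwF F (cu2 G X). norm. reflexivity. Qed.

Lemma extract2 {M : MonoidalCategory} {F G : Bicomonad M} {phi} (Hp : DL F G phi) (X Y : M) :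
  let A := F (G X) in let B := F (G Y) in
  let thA := bdelta F (G X) in let thB := bdelta F (G Y) in
  let rA := phi (G X) ∘ fmap F (bdelta G X) in let rB := phi (G Y) ∘ fmap F (bdelta G Y) in
  phi (A ⊗ B) ∘ fmap F (tco G rA rB) ∘ tco F thA thB = fmap G (tco F thA thB) ∘ tco G rA rB ->
  phi (X ⊗ Y) ∘ fmap F (b2 G X Y) ∘ b2 F (G X) (G Y)
  = fmap G (b2 F X Y) ∘ b2 G (F X) (F Y) ∘ tm (phi X) (phi Y).
Proof.
  intros A B thA thB rA rB Hb.
  set (e := fun Z : M => beps G Z ∘ beps F (G Z)).
  transitivity (fmap G (fmap F (tm (e X) (e Y))) ∘ (phi (A ⊗ B) ∘ fmap F (tco G rA rB) ∘ tco F thA thB)).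
  { symmetry. unfold tco, e, A, B, rA, rB, thA, thB. norm.
    rwb (phi_nat Hp (tm (beps F (G X)) (beps F (G Y)))).
    rwb (phi_nat Hp (tm (beps G X) (beps G Y))).
    rwFb F (nat2 G (beps F (G X)) (beps F (G Y))).
    rwFb F (nat2 G (beps G X) (beps G Y)).
    rwFT F (inner1 Hp X) (inner1 Hp Y).
    rwb (nat2 F (beps F (G X)) (beps F (G Y))).
    rwT' (cu2 F (G X)) (cu2 F (G Y)). norm. reflexivity. }
  rewrite Hb.
  unfold tco, e, A, B, rA, rB, thA, thB. norm.
  rwFb G (nat2 F (beps F (G X)) (beps F (G Y))).
  rwFT G (cu2 F (G X)) (cu2 F (G Y)). norm.
  rwFb G (nat2 F (beps G X) (beps G Y)).
  rwb (nat2 G (fmap F (beps G X)) (fmap F (beps G Y))).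
  rwT' (inner2 Hp X) (inner2 Hp Y). reflexivity.
Qed.

Lemma comod_tco {M : MonoidalCategory} (H : Bicomonad M) {X Y : M} (cX : hom X (H X)) (cY : hom Y (H Y)) :
  is_comodule (bdelta H) (beps H) cX -> is_comodule (bdelta H) (beps H) cY ->
  is_comodule (bdelta H) (beps H) (tco H cX cY).
Proof.
  unfold is_comodule, tco. intros [dX eX] [dY eY]. split; norm.
  - rwb (cd2 H X Y). rwT' dX dY. rw (nat2 H cX cY). reflexivity.
  - rw (ce2 H X Y). rwT' eX eY. norm. reflexivity.
Qed.
Lemma comod_unit {M : MonoidalCategory} (H : Bicomonad M) :
  is_comodule (bdelta H) (beps H) (b0 H).
Proof. split; [symmetry; apply cd0 | apply ce0]. Qed.
Lemma map_tm {M : MonoidalCategory} (H : Bicomonad M) {X X' Y Y' : M} (cX : hom X (H X)) (cY : hom Y (H Y))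
  (cX' : hom X' (H X')) (cY' : hom Y' (H Y')) (f : hom X X') (g : hom Y Y') :
  cX' ∘ f = fmap H f ∘ cX -> cY' ∘ g = fmap H g ∘ cY ->
  tco H cX' cY' ∘ tm f g = fmap H (tm f g) ∘ tco H cX cY.
Proof. unfold tco; intros ef eg. norm. rwT' ef eg. rw (nat2 H f g). reflexivity. Qed.
Lemma map_a {M : MonoidalCategory} (H : Bicomonad M) {X Y Z : M} (cX : hom X (H X)) (cY : hom Y (H Y)) (cZ : hom Z (H Z)) :
  tco H cX (tco H cY cZ) ∘ massoc M X Y Z = fmap H (massoc M X Y Z) ∘ tco H (tco H cX cY) cZ.
Proof.
  unfold tco. rewrite (tm1l' cX), (tm1r' cZ). norm.
  rwb (a_nat M cX cY cZ). rw (ass2 H X Y Z). reflexivity.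
Qed.
Lemma map_l {M : MonoidalCategory} (H : Bicomonad M) {X : M} (cX : hom X (H X)) :
  cX ∘ mlunit M X = fmap H (mlunit M X) ∘ tco H (b0 H) cX.
Proof.
  unfold tco. rewrite (tm_split (b0 H) cX). norm. rw (lu2 H X). rw (l_nat M cX). reflexivity.
Qed.
Lemma map_r {M : MonoidalCategory} (H : Bicomonad M) {X : M} (cX : hom X (H X)) :
  cX ∘ mrunit M X = fmap H (mrunit M X) ∘ tco H cX (b0 H).
Proof.
  unfold tco. rewrite (tm_split' cX (b0 H)). norm. rw (ru2 H X). rw (r_nat M cX). reflexivity.
Qed.
Lemma map_inv {M : MonoidalCategory} (H : Bicomonad M) {X Y : M} (c : hom X (H X)) (c' : hom Y (H Y))
  (f : hom X Y) (fi : hom Y X) :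
  c' ∘ f = fmap H f ∘ c -> f ∘ fi = idm _ -> fi ∘ f = idm _ -> c ∘ fi = fmap H fi ∘ c'.
Proof.
  intros e1 e2 e3.
  transitivity (fmap H fi ∘ fmap H f ∘ c ∘ fi).
  - rwF H e3. norm. reflexivity.
  - rwb e1. rw e2. reflexivity.
Qed.

Lemma bic_tensor {M : MonoidalCategory} {F G : Bicomonad M} {phi} (Hp : DL F G phi)
  (H2 : forall X Y : M,
      phi (X ⊗ Y) ∘ fmap F (b2 G X Y) ∘ b2 F (G X) (G Y)
      = fmap G (b2 F X Y) ∘ b2 G (F X) (F Y) ∘ tm (phi X) (phi Y))
  {X Y : M} (thX : hom X (F X)) (rhoX : hom X (G X)) (thY : hom Y (F Y)) (rhoY : hom Y (G Y)) :
  is_bicomodule phi thX rhoX -> is_bicomodule phi thY rhoY ->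
  is_bicomodule phi (tco F thX thY) (tco G rhoX rhoY).
Proof.
  intros [cX1 [cX2 bX]] [cY1 [cY2 bY]].
  split; [apply comod_tco; auto|]. split; [apply comod_tco; auto|].
  unfold tco. norm.
  rwb (nat2 F rhoX rhoY). rw (H2 X Y). rwT' bX bY. rw (nat2 G thX thY). reflexivity.
Qed.

Lemma lifted_iff {M : MonoidalCategory} (F G : Bicomonad M) phi (Hp : DL F G phi) :
  lifted_monoidal F G phi <-> monoidal_distr_law F G phi.
Proof.
  split.
  - intros [Ht [Hu _]]. split.
    + intros X Y. apply (extract2 Hp).
      destruct (Ht _ _ _ _ _ _ (cofree_bic Hp X) (cofree_bic Hp Y)) as [_ [_ E]]. exact E.
    + destruct Hu as [_ [_ E]]. exact E.
  - intros [H2 H0]. split; [|split; [|split; [|split]]].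
    + intros. apply (bic_tensor Hp H2); auto.
    + split; [apply comod_unit|]. split; [apply comod_unit|]. exact H0.
    + intros X thX rhoX X' thX' rhoX' Y thY rhoY Y' thY' rhoY' f g _ _ _ _ [f1 f2] [g1 g2].
      split; apply map_tm; auto.
    + intros; split; split; try apply map_a.
      all: apply map_inv with (f := massoc M X Y Z); [apply map_a | apply a_ai | apply ai_a].
    + intros; repeat split.
      all: first [ apply map_l | apply map_r
                 | apply map_inv with (f := mlunit M X); [apply map_l | apply l_li | apply li_l]
                 | apply map_inv with (f := mrunit M X); [apply map_r | apply r_ri | apply ri_r] ].
Qed.

Lemma smash_fwd {M : MonoidalCategory} (F G : Bicomonad M) phi (Hp : DL F G phi) :
  monoidal_distr_law F G phi ->
  is_bicomonad (H := Fcomp F G) (smash_delta F G phi) (smash_eps F G) (smash2 F G) (smash0 F G).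
Proof.
  intros [H2 H0].
  unfold is_bicomonad, is_comonad, is_monoidal_functor, bicomonad_compat, natural.
  cbn. unfold smash_delta, smash_eps, smash2, smash0.
  repeat split; prep.
  - rw (d_nat F (fmap G f)). rwFF F F (d_nat G f). rwF F (phi_nat Hp (fmap G f)). reflexivity.
  - rw (e_nat F (fmap G f)). rw (e_nat G f). reflexivity.
  - rwFb F (dl2 Hp (G X)).
    rwFb F (phi_nat Hp (fmap F (bdelta G X))).
    rwFb F (phi_nat Hp (phi (G X))).
    rwF F (d_nat F (bdelta G X)).
    rwFFb F F (phi_nat Hp (bdelta G X)).
    rwFFF F F F (coass G X).
    rwFF F F (dl1 Hp (G X)).
    rw (d_nat F (phi (G X))). rw (d_nat F (fmap F (bdelta G X))). rwb (coass F (G X)).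
    reflexivity.
  - rw (e_nat F (phi (G X))). rw (e_nat F (fmap F (bdelta G X))). rw (cu1 F (G X)).
    rw (dl4 Hp (G X)). rwF F (cu1 G X). reflexivity.
  - rwF F (dl3 Hp (G X)). rwFb F (e_nat F (fmap G (beps G X))). rwFF F F (cu2 G X).
    rw (cu2 F (G X)). reflexivity.
  - rw (nat2 F (fmap G f) (fmap G g)). rwF F (nat2 G f g). reflexivity.
  - rewrite (tm1r' (idm (F (G Z)))), (tm1l' (idm (F (G X)))). rewrite ?comp_assoc.
    rw (nat2l F (b2 G X Y) (G Z)). rwF F (ass2 G X Y Z). rw (ass2 F (G X) (G Y) (G Z)).
    rwb (nat2r F (G X) (b2 G Y Z)). reflexivity.
  - rewrite (tm1r' (idm (F (G X)))). rewrite ?comp_assoc.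
    rw (nat2l F (b0 G) (G X)). rwF F (lu2 G X). rw (lu2 F (G X)). reflexivity.
  - rewrite (tm1l' (idm (F (G X)))). rewrite ?comp_assoc.
    rw (nat2r F (G X) (b0 G)). rwF F (ru2 G X). rw (ru2 F (G X)). reflexivity.
  - rw (nat2 F (phi (G X)) (phi (G Y))). rw (nat2 F (fmap F (bdelta G X)) (fmap F (bdelta G Y))).
    rw (d_nat F (b2 G X Y)). rwb (cd2 F (G X) (G Y)). rwFFb F F (cd2 G X Y).
    rwF F (phi_nat Hp (b2 G X Y)). rwFb F (nat2 F (bdelta G X) (bdelta G Y)).
    rwF F (H2 (G X) (G Y)). reflexivity.
  - rw (e_nat F (b2 G X Y)). rw (ce2 F (G X) (G Y)). rw (ce2 G X Y). reflexivity.
  - rw (d_nat F (b0 G)). rwb (cd0 F). rwFFb F F (cd0 G). rwF F (phi_nat Hp (b0 G)).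
    rwF F H0. reflexivity.
  - rw (e_nat F (b0 G)). rw (ce0 G). rw (ce0 F). reflexivity.
Qed.

Lemma smash_bwd {M : MonoidalCategory} (F G : Bicomonad M) phi (Hp : DL F G phi) :
  is_bicomonad (H := Fcomp F G) (smash_delta F G phi) (smash_eps F G) (smash2 F G) (smash0 F G) ->
  monoidal_distr_law F G phi.
Proof.
  intros [_ [_ [Hc1 [_ [Hc3 _]]]]].
  split.
  - intros X Y.
    set (P := fmap G (fmap F (beps G (X ⊗ Y))) ∘ beps F (G (F (G (X ⊗ Y))))).
    transitivity (P ∘ (smash_delta F G phi (X ⊗ Y) ∘ smash2 F G X Y)).
    { unfold P. rewrite comp_assoc, (sd_proj Hp). unfold smash2. norm. reflexivity. }
    replace (smash_delta F G phi (X ⊗ Y) ∘ smash2 F G X Y) with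
      (fmap (Fcomp F G) (smash2 F G X Y) ∘ smash2 F G (F (G X)) (F (G Y)) ∘ tm (smash_delta F G phi X) (smash_delta F G phi Y)) by (exact (Hc1 X Y)).
    unfold P. cbn. unfold smash2, smash_delta. norm.
    rw (e_nat F (fmap G (fmap F (b2 G X Y)))).
    rw (e_nat F (fmap G (b2 F (G X) (G Y)))).
    rw (e_nat F (b2 G (F (G X)) (F (G Y)))).
    rw (ce2 F (G (F (G X))) (G (F (G Y)))).
    rwFF G F (ce2 G X Y).
    rwFb G (nat2 F (beps G X) (beps G Y)).
    rwb (nat2 G (fmap F (beps G X)) (fmap F (beps G Y))).
    rewrite <- (sd_proj Hp X), <- (sd_proj Hp Y). unfold smash_delta. norm. reflexivity.
  - set (P := fmap G (fmap F (beps G (munit M))) ∘ beps F (G (F (G (munit M))))).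
    transitivity (P ∘ (smash_delta F G phi (munit M) ∘ smash0 F G)).
    { unfold P. rewrite comp_assoc, (sd_proj Hp). unfold smash0. norm. reflexivity. }
    replace (smash_delta F G phi (munit M) ∘ smash0 F G) with
      (fmap (Fcomp F G) (smash0 F G) ∘ smash0 F G) by (exact Hc3).
    unfold P. cbn. unfold smash0. norm.
    rw (e_nat F (fmap G (fmap F (b0 G)))).
    rw (e_nat F (fmap G (b0 F))).
    rw (e_nat F (b0 G)). rw (ce0 F).
    rwFF G F (ce0 G). reflexivity.
Qed.

Theorem theorem3p5 (M : MonoidalCategory) (F G : Bicomonad M)
  (phi : forall X : M, hom (F (G X)) (G (F X)))
  (Hphi : is_distr_law (bdelta F) (beps F) (bdelta G) (beps G) phi) :
  (lifted_monoidal F G phi <-> monoidal_distr_law F G phi) /\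
  (monoidal_distr_law F G phi <->
     is_bicomonad (H := Fcomp F G) (smash_delta F G phi) (smash_eps F G)
                  (smash2 F G) (smash0 F G)) /\
  (is_bicomonad (H := Fcomp F G) (smash_delta F G phi) (smash_eps F G)
                (smash2 F G) (smash0 F G) <-> cmd_condition F G phi) /\
  (cmd_condition F G phi <-> cc_condition F G phi).
Proof.
  pose proof (lifted_iff F G phi Hphi) as E1.
  pose proof (cmd_iff F G phi Hphi) as E4.
  pose proof (cc_iff F G phi Hphi) as E5.
  assert (E3 : monoidal_distr_law F G phi <->
     is_bicomonad (H := Fcomp F G) (smash_delta F G phi) (smash_eps F G)
                  (smash2 F G) (smash0 F G))
    by (split; [apply (smash_fwd F G phi Hphi) | apply (smash_bwd F G phi Hphi)]).
  split; [exact E1|]. split; [exact E3|]. split; tauto.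
Qed.
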